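(* Let $\beta=\beta_1\cdots\beta_p$ be a finite word over $\{1,2\}$ and let $\theta=\theta_1\cdots\theta_{2r}$ ($r\ge 1$) be a finite word over $\{1,2\}$ of even length which is symmetric, i.e. $\theta_j=\theta_{2r+1-j}$ for all $j$. For infinite words $\omega_1=\omega_1(1)\omega_1(2)\cdots$ and $\omega_2=\omega_2(1)\omega_2(2)\cdots$ over $\{1,2\}$, let $\gamma=\gamma(\omega_1,\omega_2)\in\{1,2\}^{\mathbb{Z}}$ be the bi-infinite word $\omega_2^t\beta^t\,2\,\theta\,2\,\beta\,\omega_1$ (where ${}^t$ denotes reversal), indexed so that $\gamma_0=2$, $\gamma_j=\theta_j$ for $1\le j\le 2r$, $\gamma_{2r+1}=2$, $\gamma_{2r+1+j}=\beta_j$ for $1\le j\le p$, $\gamma_{2r+1+p+j}=\omega_1(j)$ for $j\ge1$, $\gamma_{-j}=\beta_j$ for $1\le j\le p$, and $\gamma_{-p-j}=\omega_2(j)$ for $j\ge 1$. Let $S$ be a set of infinite words over $\{1,2\}$ (for instance, those avoiding a given finite list of finite strings) such that for all $\omega_1,\omega_2\in S$ the Markov value $m(\gamma(\omega_1,\omega_2))=\sup_{n\in\mathbb{Z}}\lambda_n(\gamma(\omega_1,\omega_2))$ is attained at one of the two positions $0$ or $2r+1$ (the $2$'s adjacent to $\theta$), i.e. $m(\gamma)=\max\{\lambda_0(\gamma),\lambda_{2r+1}(\gamma)\}$. Then, among $\omega_1,\omega_2\in S$, the Markov value $m(\gamma(\omega_1,\omega_2))$ is minimal when $\omega_1=\omega_2=:\omega$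 and $[0;\beta,\omega]$ is minimal. Precisely: for all $\omega_1,\omega_2\in S$, $m(\gamma(\omega_1,\omega_2))\ge \max\{m(\gamma(\omega_1,\omega_1)),m(\gamma(\omega_2,\omega_2))\}$, and for $\omega,\omega'\in S$ with $[0;\beta,\omega]\le[0;\beta,\omega']$ one has $m(\gamma(\omega,\omega))\le m(\gamma(\omega',\omega'))$.
   Context: For $\underline{\alpha}=(\alpha_n)_{n\in\mathbb{Z}}\in\{1,2\}^{\mathbb{Z}}$ and $k\in\mathbb{Z}$, $\lambda_k(\underline{\alpha})=[\alpha_k;\alpha_{k+1},\alpha_{k+2},\dots]+[0;\alpha_{k-1},\alpha_{k-2},\dots]$, where $[b_0;b_1,b_2,\dots]=b_0+1/(b_1+1/(b_2+\cdots))$. For a finite word $\beta$ and infinite word $\omega$, $[0;\beta,\omega]$ denotes the continued fraction whose partial quotients are the letters of $\beta$ followed by those of $\omega$. *)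

(* Defs.v *)
From Stdlib Require Import Reals Lra Lia ZArith List Bool.
From Coquelicot Require Import Coquelicot.
Open Scope R_scope.

(* Infinite words: nat -> nat, 0-indexed (w 0 is the first letter).
   Bi-infinite words: Z -> nat.  Finite words: list nat. *)

Definition over12 (a : nat) : Prop := a = 1%nat \/ a = 2%nat.
Definition word12 (w : nat -> nat) : Prop := forall i, over12 (w i).
Definition fword12 (l : list nat) : Prop := List.Forall over12 l.

Fixpoint cf_fin (n : nat) (a : nat -> nat) : R :=
  match n with
  | O => INR (a O)
  | S n' => INR (a O) + / cf_fin n' (fun i => a (S i))
  end.

Definition cf (a : nat -> nat) : R := real (Lim_seq (fun n => cf_fin n a)).

Definition lambda (k : Z) (alpha : Z -> nat) : R :=
  cf (fun i => alpha (k + Z.of_nat i)%Z) + / cf (fun i => alpha (k - 1 - Z.of_nat i)%Z).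

Definition markov (alpha : Z -> nat) : R :=
  real (Lub_Rbar (fun x => exists k : Z, x = lambda k alpha)).

Definition wconcat (l : list nat) (w : nat -> nat) : nat -> nat :=
  fun i => if Nat.ltb i (length l) then nth i l 0%nat else w (i - length l)%nat.

Definition cf0 (beta : list nat) (w : nat -> nat) : R := / cf (wconcat beta w).

Definition gamma (beta theta : list nat) (w1 w2 : nat -> nat) (j : Z) : nat :=
  let p := Z.of_nat (length beta) in
  let t := Z.of_nat (length theta) in
  if (j =? 0)%Z then 2%nat
  else if ((1 <=? j) && (j <=? t))%Z then nth (Z.to_nat (j - 1)) theta 0%nat
  else if (j =? t + 1)%Z then 2%nat
  else if ((t + 1 <? j) && (j <=? t + 1 + p))%Z then nth (Z.to_nat (j - t - 2)) beta 0%nat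
  else if (t + 1 + p <? j)%Z then w1 (Z.to_nat (j - t - 2 - p))
  else if ((- p <=? j) && (j <=? -1))%Z then nth (Z.to_nat (- j - 1)) beta 0%nat
  else w2 (Z.to_nat (- j - p - 1)).

(* Main.v *)
Require Import Defs.
From Stdlib Require Import Reals ZArith List Lra Lia Bool.
From Coquelicot Require Import Coquelicot.
Open Scope R_scope.

Lemma over12_INR a : over12 a -> 1 <= INR a <= 2.
Proof. intros [-> | ->]; simpl; lra. Qed.

Lemma word12_shift a : word12 a -> word12 (fun i => a (S i)).
Proof. intros H i; apply H. Qed.

Lemma cf_fin_bounds n : forall a, word12 a -> 1 <= cf_fin n a <= 3.
Proof.
  induction n as [|n IH]; intros a Ha; simpl.
  - pose proof (over12_INR _ (Ha 0%nat)); lra.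
  - pose proof (over12_INR _ (Ha 0%nat)).
    destruct (IH _ (word12_shift _ Ha)) as [H1 H2].
    assert (0 < / cf_fin n (fun i => a (S i)) <= 1).
    { split. apply Rinv_0_lt_compat; lra.
      rewrite <- Rinv_1. apply Rinv_le_contravar; lra. }
    lra.
Qed.

Fixpoint F (n : nat) (a : nat -> nat) (y : R) : R :=
  match n with
  | O => y
  | S n' => INR (a O) + / F n' (fun i => a (S i)) y
  end.

Lemma cf_fin_F k n : forall a, cf_fin (n + k) a = F n a (cf_fin k (fun i => a (n + i)%nat)).
Proof.
  induction n as [|n IH]; intros a; simpl. reflexivity.
  rewrite IH. reflexivity.
Qed.

Lemma inv_bounds u : 1 <= u <= 3 -> 1/3 <= / u <= 1.
Proof.
  intros H. split.
  - replace (1/3) with (/3) by field. apply Rinv_le_contravar; lra.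
  - rewrite <- Rinv_1. apply Rinv_le_contravar; lra.
Qed.

Lemma F_bounds n : forall a y, word12 a -> 1 <= y <= 3 -> 1 <= F n a y <= 3.
Proof.
  induction n as [|n IH]; intros a y Ha Hy; simpl. lra.
  pose proof (over12_INR _ (Ha 0%nat)).
  pose proof (inv_bounds _ (IH _ y (word12_shift _ Ha) Hy)). lra.
Qed.

Lemma F_bounds' n : forall a y, word12 a -> 1 <= y <= 3 -> 4/3 <= F (S n) a y.
Proof.
  intros a y Ha Hy; simpl.
  pose proof (over12_INR _ (Ha 0%nat)).
  pose proof (inv_bounds _ (F_bounds n _ y (word12_shift _ Ha) Hy)). lra.
Qed.

Lemma inv_diff u u' c : 0 < c -> c <= u -> c <= u' -> Rabs (/u - /u') <= Rabs (u - u') / (c*c).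
Proof.
  intros Hc H1 H2.
  replace (/u - /u') with ((u' - u) / (u * u')) by (field; lra).
  unfold Rdiv. rewrite Rabs_mult, Rabs_minus_sym.
  apply Rmult_le_compat_l. apply Rabs_pos.
  rewrite Rabs_inv, Rabs_right by nra.
  apply Rinv_le_contravar; nra.
Qed.

Definition PF n := forall a y y', word12 a -> 1 <= y <= 3 -> 1 <= y' <= 3 ->
  Rabs (F n a y - F n a y') <= 2 * (3/4)^n.

Lemma PF_all n : PF n /\ PF (S n).
Proof.
  induction n as [|n [IH1 IH2]].
  - split; intros a y y' Ha Hy Hy'; simpl.
    + unfold Rabs; destruct Rcase_abs; lra.
    + replace (INR (a 0%nat) + / y - (INR (a 0%nat) + / y')) with (/y - /y') by ring.
      pose proof (inv_bounds _ Hy); pose proof (inv_bounds _ Hy'). unfold Rabs; destruct Rcase_abs; lra.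
  - split. exact IH2.
    intros a y y' Ha Hy Hy'.
    change (F (S (S n)) a y) with (INR (a 0%nat) + / F (S n) (fun i => a (S i)) y).
    change (F (S (S n)) a y') with (INR (a 0%nat) + / F (S n) (fun i => a (S i)) y').
    replace (INR (a 0%nat) + / F (S n) (fun i => a (S i)) y - (INR (a 0%nat) + / F (S n) (fun i => a (S i)) y'))
      with (/ F (S n) (fun i => a (S i)) y - / F (S n) (fun i => a (S i)) y') by ring.
    eapply Rle_trans. apply (inv_diff _ _ (4/3)); try lra; apply F_bounds'; auto using word12_shift.
    change (F (S n) (fun i => a (S i)) y) with (INR (a 1%nat) + / F n (fun i => a (S (S i))) y).
    change (F (S n) (fun i => a (S i)) y') with (INR (a 1%nat) + / F n (fun i => a (S (S i))) y').
    replace (INR (a 1%nat) + / F n (fun i => a (S (S i))) y - (INR (a 1%nat) + / F n (fun i => a (S (S i))) y'))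
      with (/ F n (fun i => a (S (S i))) y - / F n (fun i => a (S (S i))) y') by ring.
    assert (Hw : word12 (fun i => a (S (S i)))) by (intros i; apply Ha).
    pose proof (F_bounds n _ y Hw Hy). pose proof (F_bounds n _ y' Hw Hy').
    pose proof (inv_diff (F n (fun i => a (S (S i))) y) (F n (fun i => a (S (S i))) y') 1 ltac:(lra) ltac:(lra) ltac:(lra)).
    pose proof (IH1 _ y y' Hw Hy Hy').
    replace (2 * (3/4) ^ S (S n)) with ((2 * (3/4)^n) * (9/16)) by (change ((3/4)^S (S n)) with (3/4 * (3/4 * (3/4)^n)); field).
    apply (Rmult_le_reg_r (4/3 * (4/3))). lra.
    unfold Rdiv at 1. rewrite Rmult_assoc, Rinv_l by lra. lra.
Qed.

Lemma cf_fin_cauchy a : word12 a -> forall n k, Rabs (cf_fin (n + k) a - cf_fin n a) <= 2 * (3/4)^n.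
Proof.
  intros Ha n k.
  rewrite (cf_fin_F k n a).
  replace (cf_fin n a) with (cf_fin (n + 0) a) by (f_equal; lia).
  rewrite (cf_fin_F 0 n a).
  assert (Hw : word12 (fun i => a (n + i)%nat)) by (intros i; apply Ha).
  apply (proj1 (PF_all n)); auto; apply cf_fin_bounds; auto.
Qed.

Lemma cf_fin_cv a : word12 a -> is_lim_seq (fun n => cf_fin n a) (cf a).
Proof.
  intros Ha.
  assert (Hex : ex_finite_lim_seq (fun n => cf_fin n a)).
  { apply ex_lim_seq_cauchy_corr. intros eps.
    destruct (pow_lt_1_zero (3/4) ltac:(rewrite Rabs_right; lra) (eps/2) ltac:(destruct eps; simpl; lra)) as [N HN].
    exists N. intros n m Hn Hm.
    assert (Hs : forall n k, (N <= n)%nat -> Rabs (cf_fin (n + k) a - cf_fin n a) < eps).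
    { intros n0 k Hn0. eapply Rle_lt_trans. apply cf_fin_cauchy; auto.
      specialize (HN n0 Hn0). rewrite Rabs_right in HN. lra.
      apply Rle_ge, pow_le; lra. }
    destruct (le_lt_dec n m) as [H|H].
    - replace m with (n + (m - n))%nat by lia. rewrite Rabs_minus_sym. apply Hs; auto.
    - replace n with (m + (n - m))%nat by lia. apply Hs; auto. }
  pose proof (Lim_seq_correct' _ Hex) as H.
  unfold cf. destruct Hex as [l Hl]. rewrite (is_lim_seq_unique _ _ Hl) in *. simpl. exact Hl.
Qed.

Lemma cf_bounds a : word12 a -> 1 <= cf a <= 3.
Proof.
  intros Ha. pose proof (cf_fin_cv a Ha) as H. split.
  - pose proof (is_lim_seq_le (fun _ => 1) _ 1 (cf a) (fun n => proj1 (cf_fin_bounds n a Ha)) (is_lim_seq_const 1) H). exact H0.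
  - pose proof (is_lim_seq_le _ (fun _ => 3) (cf a) 3 (fun n => proj2 (cf_fin_bounds n a Ha)) H (is_lim_seq_const 3)). exact H0.
Qed.

Lemma cf_cons a : word12 a -> cf a = INR (a 0%nat) + / cf (fun i => a (S i)).
Proof.
  intros Ha.
  pose proof (cf_fin_cv _ (word12_shift _ Ha)) as H1.
  pose proof (cf_bounds _ (word12_shift _ Ha)) as Hb.
  assert (H2 : is_lim_seq (fun n => INR (a 0%nat) + / cf_fin n (fun i => a (S i))) (INR (a 0%nat) + / cf (fun i => a (S i)))).
  { apply is_lim_seq_plus'. apply is_lim_seq_const.
    pose proof (is_lim_seq_inv _ _ H1) as H3. simpl in H3. apply H3.
    intro E; injection E; lra. }
  pose proof (cf_fin_cv _ Ha) as H4.
  apply is_lim_seq_incr_1 in H4. simpl in H4.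
  pose proof (is_lim_seq_unique _ _ H4) as E1. pose proof (is_lim_seq_unique _ _ H2) as E2.
  rewrite E1 in E2. injection E2; auto.
Qed.

Lemma cf_fin_ext n : forall a b, (forall i, a i = b i) -> cf_fin n a = cf_fin n b.
Proof.
  induction n as [|n IH]; intros a b H; simpl. now rewrite H.
  rewrite H, (IH _ (fun i => b (S i))); auto.
Qed.

Lemma cf_ext a b : (forall i, a i = b i) -> cf a = cf b.
Proof. intros H; unfold cf; f_equal; apply Lim_seq_ext; intros; apply cf_fin_ext; auto. Qed.

Fixpoint G (l : list nat) (y : R) : R :=
  match l with nil => y | a :: l' => INR a + / G l' y end.

Lemma G_app l1 l2 y : G (l1 ++ l2) y = G l1 (G l2 y).
Proof. induction l1; simpl; auto. now rewrite IHl1. Qed.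

Lemma wconcat_word l w : fword12 l -> word12 w -> word12 (wconcat l w).
Proof.
  intros Hl Hw i. unfold wconcat. destruct (Nat.ltb_spec i (length l)).
  - unfold fword12 in Hl; rewrite Forall_forall in Hl. apply Hl, nth_In; auto.
  - apply Hw.
Qed.

Lemma cf_wconcat l : forall w, fword12 l -> word12 w -> cf (wconcat l w) = G l (cf w).
Proof.
  induction l as [|a l IH]; intros w Hl Hw; simpl.
  - apply cf_ext; intros i; unfold wconcat; simpl. f_equal; lia.
  - inversion Hl; subst.
    rewrite cf_cons by (apply wconcat_word; auto).
    rewrite <- IH by auto. f_equal.
Qed.

Lemma nth_app_cons {A} (l m : list A) (x d : A) i :
  nth i (l ++ x :: m) d = if Nat.ltb i (length l) then nth i l d
    else if Nat.eqb i (length l) then x else nth (i - length l - 1) m d.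
Proof.
  destruct (Nat.ltb_spec i (length l)).
  - apply app_nth1; auto.
  - rewrite app_nth2 by auto. destruct (Nat.eqb_spec i (length l)).
    + subst. now rewrite Nat.sub_diag.
    + destruct (i - length l)%nat eqn:E. lia. simpl. f_equal. lia.
Qed.

Ltac crush :=
  repeat (match goal with
  | |- context [Z.eqb ?a ?b] => destruct (Z.eqb_spec a b)
  | |- context [Z.leb ?a ?b] => destruct (Z.leb_spec a b)
  | |- context [Z.ltb ?a ?b] => destruct (Z.ltb_spec a b)
  | |- context [Nat.ltb ?a ?b] => destruct (Nat.ltb_spec a b)
  | |- context [Nat.eqb ?a ?b] => destruct (Nat.eqb_spec a b)
  end; cbn [andb orb]); try lia; try reflexivity.

Section G.
Variables (beta theta : list nat) (w1 w2 : nat -> nat) (r : nat).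
Hypothesis Ht : length theta = (2 * r)%nat.

Lemma gamma_A i : gamma beta theta w1 w2 (0 + Z.of_nat i)%Z = wconcat (2%nat :: theta ++ 2%nat :: beta) w1 i.
Proof.
  unfold gamma, wconcat. simpl length. rewrite length_app. simpl length.
  destruct i as [|i]. reflexivity.
  cbn [nth]. rewrite nth_app_cons. rewrite Ht in *.
  crush; f_equal; lia.
Qed.

Lemma gamma_B i : gamma beta theta w1 w2 (0 - 1 - Z.of_nat i)%Z = wconcat beta w2 i.
Proof.
  unfold gamma, wconcat. rewrite Ht in *.
  crush; f_equal; lia.
Qed.

Lemma gamma_C i : gamma beta theta w1 w2 (Z.of_nat (2 * r + 1) + Z.of_nat i)%Z = wconcat (2%nat :: beta) w1 i.
Proof.
  unfold gamma, wconcat. simpl length. rewrite Ht in *.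
  destruct i as [|i]; cbn [nth]; crush; f_equal; lia.
Qed.

Hypothesis Hsym : forall j, (j < 2 * r)%nat -> nth j theta 0%nat = nth (2 * r - 1 - j) theta 0%nat.

Lemma gamma_D i : gamma beta theta w1 w2 (Z.of_nat (2 * r + 1) - 1 - Z.of_nat i)%Z = wconcat (theta ++ 2%nat :: beta) w2 i.
Proof.
  unfold gamma, wconcat. rewrite length_app. simpl length. rewrite nth_app_cons. rewrite Ht in *.
  crush; try (f_equal; lia).
  rewrite (Hsym i) by lia. f_equal; lia.
Qed.
End G.

Lemma G_ge1 l y : fword12 l -> 1 <= y -> 1 <= G l y.
Proof.
  induction l as [|a l IH]; intros Hl Hy; simpl. lra.
  inversion Hl; subst. pose proof (over12_INR _ H1). pose proof (IH H2 Hy).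
  assert (0 < / G l y) by (apply Rinv_0_lt_compat; lra). lra.
Qed.

Lemma G_mono l y y' : fword12 l -> 1 <= y <= y' ->
  if Nat.even (length l) then G l y <= G l y' else G l y' <= G l y.
Proof.
  induction l as [|a l IH]; intros Hl Hy. simpl; lra.
  cbn [G]. change (length (a::l)) with (S (length l)).
  inversion Hl; subst. specialize (IH H2 Hy).
  pose proof (G_ge1 l y H2 ltac:(lra)). pose proof (G_ge1 l y' H2 ltac:(lra)).
  rewrite Nat.even_succ, <- Nat.negb_even.
  destruct (Nat.even (length l)); simpl.
  - apply Rplus_le_compat_l, Rinv_le_contravar; lra.
  - apply Rplus_le_compat_l, Rinv_le_contravar; lra.
Qed.

Lemma G_lip l y y' : fword12 l -> 1 <= y -> 1 <= y' -> Rabs (G l y - G l y') <= Rabs (y - y').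
Proof.
  induction l as [|a l IH]; intros Hl Hy Hy'; simpl. lra.
  inversion Hl; subst.
  pose proof (G_ge1 l y H2 Hy). pose proof (G_ge1 l y' H2 Hy').
  replace (INR a + / G l y - (INR a + / G l y')) with (/ G l y - / G l y') by ring.
  eapply Rle_trans. apply (inv_diff _ _ 1); lra.
  replace (Rabs (G l y - G l y') / (1 * 1)) with (Rabs (G l y - G l y')) by field.
  auto.
Qed.

Theorem lemma2p1 (beta theta : list nat) (r : nat) (S : (nat -> nat) -> Prop) :
  fword12 beta ->
  fword12 theta ->
  (1 <= r)%nat ->
  length theta = (2 * r)%nat ->
  (forall j, (j < 2 * r)%nat -> nth j theta 0%nat = nth (2 * r - 1 - j) theta 0%nat) ->
  (forall w, S w -> word12 w) ->
  (forall w1 w2, S w1 -> S w2 ->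
     markov (gamma beta theta w1 w2) =
     Rmax (lambda 0 (gamma beta theta w1 w2))
          (lambda (Z.of_nat (2 * r + 1)) (gamma beta theta w1 w2))) ->
  (forall w1 w2, S w1 -> S w2 ->
     markov (gamma beta theta w1 w2) >=
     Rmax (markov (gamma beta theta w1 w1)) (markov (gamma beta theta w2 w2)))
  /\
  (forall w w', S w -> S w' -> cf0 beta w <= cf0 beta w' ->
     markov (gamma beta theta w w) <= markov (gamma beta theta w' w')).
Proof.
  intros Hb Ht Hr Hlen Hsym HS Hm.
  set (f := fun x => / G theta (2 + x)).
  assert (Hx : forall w, S w -> 1/3 <= cf0 beta w <= 1).
  { intros w Hw. unfold cf0. apply inv_bounds. apply cf_bounds, wconcat_word; auto. }
  assert (Hl : forall w1 w2, S w1 -> S w2 ->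
     markov (gamma beta theta w1 w2) =
     Rmax (2 + f (cf0 beta w1) + cf0 beta w2) (2 + cf0 beta w1 + f (cf0 beta w2))).
  { intros w1 w2 H1 H2. rewrite Hm by auto. unfold lambda, f.
    assert (W1 := HS _ H1). assert (W2 := HS _ H2).
    rewrite (cf_ext _ _ (gamma_A beta theta w1 w2 r Hlen)).
    rewrite (cf_ext _ _ (gamma_B beta theta w1 w2 r Hlen)).
    rewrite (cf_ext _ _ (gamma_C beta theta w1 w2 r Hlen)).
    rewrite (cf_ext _ _ (gamma_D beta theta w1 w2 r Hlen Hsym)).
    assert (Hf : fword12 (2%nat :: theta ++ 2%nat :: beta)).
    { constructor. right; auto. apply Forall_app; split; auto. constructor; auto. right; auto. }
    assert (Hf2 : fword12 (theta ++ 2%nat :: beta)) by (inversion Hf; auto).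
    assert (Hf3 : fword12 (2%nat :: beta)) by (constructor; auto; right; auto).
    rewrite !cf_wconcat by auto.
    unfold cf0. rewrite !cf_wconcat by auto.
    rewrite G_app. simpl G. rewrite G_app. simpl G.
    replace (INR 2) with 2 by (simpl; lra).
    f_equal; ring. }
  assert (Hfd : forall x x', 1/3 <= x <= x' -> f x' <= f x).
  { intros x x' Hxx. unfold f.
    pose proof (G_mono theta (2 + x) (2 + x') Ht ltac:(lra)) as M.
    rewrite Hlen, Nat.even_mul in M. simpl in M.
    pose proof (G_ge1 theta (2 + x) Ht ltac:(lra)).
    apply Rinv_le_contravar; lra. }
  assert (Hfl : forall x x', 1/3 <= x <= x' -> f x - f x' <= x' - x).
  { intros x x' Hxx. unfold f.
    pose proof (G_mono theta (2 + x) (2 + x') Ht ltac:(lra)) as M.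
    rewrite Hlen, Nat.even_mul in M. simpl in M.
    pose proof (G_ge1 theta (2 + x) Ht ltac:(lra)).
    pose proof (G_ge1 theta (2 + x') Ht ltac:(lra)).
    pose proof (G_lip theta (2 + x) (2 + x') Ht ltac:(lra) ltac:(lra)) as L.
    pose proof (inv_diff (G theta (2 + x)) (G theta (2 + x')) 1 ltac:(lra) ltac:(lra) ltac:(lra)) as D.
    revert L D. unfold Rabs. repeat destruct Rcase_abs; intros; lra. }
  split.
  - intros w1 w2 H1 H2. rewrite !Hl by auto.
    pose proof (Hx _ H1). pose proof (Hx _ H2).
    destruct (Rle_dec (cf0 beta w1) (cf0 beta w2)).
    + pose proof (Hfd (cf0 beta w1) (cf0 beta w2) ltac:(lra)).
      unfold Rmax; repeat destruct Rle_dec; lra.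
    + pose proof (Hfd (cf0 beta w2) (cf0 beta w1) ltac:(lra)).
      unfold Rmax; repeat destruct Rle_dec; lra.
  - intros w w' H1 H2 Hle. rewrite !Hl by auto.
    pose proof (Hx _ H1). pose proof (Hx _ H2).
    pose proof (Hfl (cf0 beta w) (cf0 beta w') ltac:(lra)).
    unfold Rmax; repeat destruct Rle_dec; lra.
Qed.
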